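(* Let $1<p<\infty$, $k\in\mathbb N$, and $\delta,c_1,\dots,c_k>0$. Suppose $l\in\mathbb N$ satisfies $l\left(\frac{\min(c_1,\dots,c_k)}{\max(c_1,\dots,c_k)}\right)^p\ge1$. Let $(\Omega,\Sigma,\mu)$ be any measure space and let $f_1,\dots,f_l$ be pairwise disjoint functions in $L^{p,\infty}(\Omega,\Sigma,\mu)$ such that $|f_j|\ge\sum_{m=1}^k c_m\chi_{\sigma(m,j)}$ for each $j$, where for each $j$ the sets $\sigma(1,j),\dots,\sigma(k,j)\in\Sigma$ are pairwise disjoint with $\mu(\sigma(m,j))>(\delta/c_m)^p$ for $1\le m\le k$. Then $$\Big\|\sum_{j=1}^l j^{-1/p}f_j\Big\|\ge\Big(\frac k2\Big)^{1/p}\delta.$$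
   Context: $L^{p,\infty}(\Omega,\Sigma,\mu)$ is the space of (equivalence classes of) measurable $f$ with $\|f\|=\sup_{c>0}c\,(\mu\{|f|>c\})^{1/p}<\infty$; here $\|\cdot\|$ denotes exactly this quasi-norm. Functions $f,g$ are disjoint if $|f|\wedge|g|=0$. *)

(* Defs.v *)
From HB Require Import structures.
From mathcomp Require Import all_boot all_order all_algebra.
From mathcomp Require Import all_classical all_reals all_analysis.
Set Implicit Arguments. Unset Strict Implicit. Unset Printing Implicit Defensive.
Import Order.TTheory GRing.Theory Num.Theory.
Local Open Scope classical_set_scope.
Local Open Scope ring_scope.

Definition weak_norm d (T : measurableType d) (R : realType)
  (mu : {measure set T -> \bar R}) (p : R) (f : T -> R) : \bar R :=
  ereal_sup [set (c%:E * poweR (mu [set x | (c < `|f x|)%R]) p^-1)%E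
            | c in [set c : R | (0 < c)%R]].

Definition in_weakLp d (T : measurableType d) (R : realType)
  (mu : {measure set T -> \bar R}) (p : R) (f : T -> R) : Prop :=
  measurable_fun setT f /\ (weak_norm mu p f < +oo)%E.

Definition disjoint_fun d (T : measurableType d) (R : realType)
  (mu : {measure set T -> \bar R}) (f g : T -> R) : Prop :=
  {ae mu, forall x, Num.min `|f x| `|g x| = 0}.

(* Main.v *)
Require Import Defs.
From HB Require Import structures.
From mathcomp Require Import all_boot all_order all_algebra.
From mathcomp Require Import all_classical all_reals all_analysis.
From mathcomp Require Import measurable_realfun.
From mathcomp Require Import ring lra.
Import Order.TTheory GRing.Theory Num.Theory.
Local Open Scope classical_set_scope.
Local Open Scope ring_scope.

Section H.
Context d (T : measurableType d) (R : realType) (mu : {measure set T -> \bar R}).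

Lemma mu_bigU (I : eqType) (s : seq I) (G : I -> set T) : uniq s ->
  (forall i, i \in s -> measurable (G i)) ->
  (forall i j, i \in s -> j \in s -> i != j -> G i `&` G j = set0) ->
  mu (\big[setU/set0]_(i <- s) G i) = (\sum_(i <- s) mu (G i))%E.
Proof.
elim: s => [|i s IH] /=; first by rewrite !big_nil measure0.
move=> /andP[nis us] mG dG.
rewrite !big_cons measureU.
- congr (_ + _)%E; apply: IH => // [j js|j j' js j's]; first by apply: mG; rewrite inE js orbT.
  by apply: dG; rewrite inE ?js ?j's orbT.
- by apply: mG; rewrite inE eqxx.
- by rewrite big_seq; apply: bigsetU_measurable => j js; apply: mG; rewrite inE js orbT.
rewrite big_seq; apply: (big_ind (fun X => G i `&` X = set0)).
- by rewrite setI0.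
- by move=> X Y X0 Y0; rewrite setIUr X0 Y0 setU0.
move=> j js; apply: dG; rewrite ?inE ?eqxx ?js ?orbT //.
by apply/negP => /eqP ij; move: nis; rewrite ij js.
Qed.

Lemma msum (s : seq nat) (h : nat -> T -> R) :
  (forall i, i \in s -> measurable_fun setT (h i)) ->
  measurable_fun setT (fun x => \sum_(i <- s) h i x).
Proof.
elim: s => [|i s IH] mh.
  by under eq_fun do rewrite big_nil; exact: measurable_cst.
under eq_fun do rewrite big_cons.
apply: measurable_funD; first by apply: mh; rewrite inE eqxx.
by apply: IH => j js; apply: mh; rewrite inE js orbT.
Qed.

End H.

Lemma ltr_powR_inv (R : realType) (p u v : R) : 0 < p -> 0 <= u -> 0 <= v ->
  u `^ p < v `^ p -> u < v.
Proof.
move=> p0 u0 v0 h; rewrite ltNge; apply/negP => vu.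
have := ge0_ler_powR (ltW p0) v0 u0 vu; by rewrite leNgt h.
Qed.

Lemma powRK (R : realType) (u p : R) : 0 < p -> 0 <= u -> (u `^ p) `^ p^-1 = u.
Proof. by move=> p0 u0; rewrite -powRrM mulfV ?gt_eqF // powRr1. Qed.

Lemma powRV (R : realType) (b p : R) : 0 <= b -> (b ^-1) `^ p = (b `^ p)^-1.
Proof.
move=> b0; rewrite -powR_inv1 // -powRrM mulrC powRrM powR_inv1 //; exact: powR_ge0.
Qed.

Theorem lemma9 (R : realType) (p : R) (k l : nat) (delta : R) (c : nat -> R)
  (d : measure_display) (T : measurableType d) (mu : {measure set T -> \bar R})
  (f : nat -> T -> R) (sigma : nat -> nat -> set T) :
  1 < p -> (0 < k)%N -> 0 < delta ->
  (forall m, (1 <= m <= k)%N -> 0 < c m) ->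
  1 <= l%:R * ((\big[Num.min/c 1%N]_(1 <= m < k.+1) c m)
                / (\big[Num.max/c 1%N]_(1 <= m < k.+1) c m)) `^ p ->
  (forall j, (1 <= j <= l)%N -> in_weakLp mu p (f j)) ->
  (forall i j, (1 <= i <= l)%N -> (1 <= j <= l)%N -> i <> j ->
     disjoint_fun mu (f i) (f j)) ->
  (forall j m, (1 <= j <= l)%N -> (1 <= m <= k)%N -> measurable (sigma m j)) ->
  (forall j m m', (1 <= j <= l)%N -> (1 <= m <= k)%N -> (1 <= m' <= k)%N ->
     m <> m' -> sigma m j `&` sigma m' j = set0) ->
  (forall j m, (1 <= j <= l)%N -> (1 <= m <= k)%N ->
     ((delta / c m) `^ p)%:E < mu (sigma m j))%E ->
  (forall j, (1 <= j <= l)%N ->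
     {ae mu, forall x, \sum_(1 <= m < k.+1) c m * \1_(sigma m j) x <= `|f j x|}) ->
  (((k%:R / 2) `^ p^-1 * delta)%:E
     <= weak_norm mu p (fun x => (\sum_(1 <= j < l.+1) j%:R `^ (- p^-1) * f j x)%R))%E.
Proof.
move=> p1 k0 d0 cpos hl fL fdisj sm sdisj smu flow.
have p0 : 0 < p by apply: lt_trans p1.
set a := \big[Num.min/c 1%N]_(1 <= m < k.+1) c m in hl.
set b := \big[Num.max/c 1%N]_(1 <= m < k.+1) c m in hl.
have ac m : (1 <= m <= k)%N -> a <= c m.
  by move=> hm; apply: ge_bigmin_seq => //; rewrite mem_index_iota ltnS.
have cb m : (1 <= m <= k)%N -> c m <= b.
  by move=> hm; apply: le_bigmax_seq => //; rewrite mem_index_iota ltnS.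
have k1 : (1 <= 1 <= k)%N by rewrite leqnn k0.
have a0 : 0 < a.
  rewrite /a big_seq_cond; apply: (big_ind (fun x => 0 < x)).
  - exact: cpos.
  - by move=> x y x0 y0; rewrite lt_min x0 y0.
  - by move=> m /andP[]; rewrite mem_index_iota ltnS => hm _; apply: cpos.
have b0 : 0 < b by apply: lt_le_trans (cpos 1%N k1) (cb 1%N k1).
have l0 : (0 < l)%N.
  by move: hl; case: (l) => //=; rewrite mul0r ler10.
have L0 : 0 < (l%:R : R) by rewrite ltr0n.
set t := (b `^ p / (2 * l%:R)) `^ p^-1.
have tp : t `^ p = b `^ p / (2 * l%:R).
  by rewrite /t -powRrM mulVf ?gt_eqF // powRr1 // divr_ge0 // ?powR_ge0 // mulr_ge0 // ltW.
have t0 : 0 < t by rewrite powR_gt0 // divr_gt0 // ?powR_gt0 // mulr_gt0.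
have tp0 : 0 < t `^ p by rewrite powR_gt0.
pose x m := c m `^ p / t `^ p.
have hl' : b `^ p <= l%:R * a `^ p.
  move: hl; rewrite powRM ?invr_ge0; [|exact: ltW|exact: ltW].
  rewrite powRV; last exact: ltW.
  by rewrite mulrA ler_pdivlMr ?powR_gt0 // mul1r.
have x2 m : (1 <= m <= k)%N -> 2 <= x m.
  move=> hm; rewrite /x ler_pdivlMr // tp.
  have -> : 2 * (b `^ p / (2 * l%:R)) = b `^ p / l%:R.
    by field; rewrite pnatr_eq0 -lt0n l0.
  rewrite ler_pdivrMr // mulrC (le_trans hl') // ler_wpM2l // ?ler0n //.
  apply: ge0_ler_powR; rewrite ?nnegrE; [exact: ltW|exact: ltW|exact: (le_trans (ltW a0) (ac m hm))|exact: ac].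
have x2l m : (1 <= m <= k)%N -> x m <= 2 * l%:R.
  move=> hm; rewrite /x ler_pdivrMr // tp.
  have -> : 2 * l%:R * (b `^ p / (2 * l%:R)) = b `^ p.
    by field; rewrite pnatr_eq0 -lt0n l0.
  apply: ge0_ler_powR; rewrite ?nnegrE; [exact: ltW|exact: (le_trans (ltW a0) (ac m hm))|exact: ltW|exact: cb].
pose n m := minn l `|Num.ceil (x m / 2)|%N.
have Nz m : (1 <= m <= k)%N ->
    (`|Num.ceil (x m / 2)|%N)%:R = (Num.ceil (x m / 2))%:~R :> R.
  move=> hm; rewrite natr_absz gtr0_norm // ceil_gt0.
  by rewrite divr_gt0 // (lt_le_trans _ (x2 m hm)).
have nge m : (1 <= m <= k)%N -> x m / 2 <= (n m)%:R.
  move=> hm; rewrite /n /=; case: (leqP l `|Num.ceil (x m / 2)|%N) => h.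
    rewrite ler_pdivrMr // mulrC; exact: x2l.
  by rewrite Nz // ceil_ge.
have nlt m j : (1 <= m <= k)%N -> (j <= n m)%N -> j%:R < x m.
  move=> hm hj; have := ceilB1_lt (x m / 2); rewrite intrB => h1.
  have h2 := x2 m hm.
  have h3 : (j%:R : R) <= (Num.ceil (x m / 2))%:~R.
    by rewrite -Nz // ler_nat (leq_trans hj) // geq_minr.
  lra.
have nl m : (n m <= l)%N by rewrite geq_minl.
set F := fun x => \sum_(1 <= j < l.+1) j%:R `^ (- p^-1) * f j x.
have ae1 : \forall y \ae mu, forall j, (1 <= j <= l)%N ->
   \sum_(1 <= m < k.+1) c m * \1_(sigma m j) y <= `|f j y|.
  apply: ae_foralln => j; case: (boolP (1 <= j <= l)%N) => hj.
    by apply: filterS (flow j hj) => y h _.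
  by apply: nearW => y hj'; case/negP: hj.
have ae2 : \forall y \ae mu, forall i j, (1 <= i <= l)%N -> (1 <= j <= l)%N -> i <> j ->
    Num.min `|f i y| `|f j y| = 0.
  apply: ae_foralln => i; apply: ae_foralln => j.
  case: (boolP [&& (1 <= i <= l)%N, (1 <= j <= l)%N & (i != j)]) => [/and3P[hi hj /eqP ij]|h].
    by apply: filterS (fdisj i j hi hj ij) => y h _ _ _.
  by apply: nearW => y hi hj ij; case/negP: h; rewrite hi hj; apply/eqP.
have [N [mN muN hN]] := @filterS2 _ _ _ _ _ _ (fun y h1 h2 => conj h1 h2) ae1 ae2.
have QN y : ~ N y -> (forall j, (1 <= j <= l)%N ->
   \sum_(1 <= m < k.+1) c m * \1_(sigma m j) y <= `|f j y|) /\
   (forall i j, (1 <= i <= l)%N -> (1 <= j <= l)%N -> i <> j ->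
    Num.min `|f i y| `|f j y| = 0).
  by move=> ny; apply: (contra_notP _ ny) => nq; exact: hN nq.
pose w (j : nat) := (j%:R : R) `^ (- p^-1).
have Fv m j y : (1 <= m <= k)%N -> (1 <= j <= l)%N -> sigma m j y -> ~ N y ->
   [/\ c m <= `|f j y|, (forall i, (1 <= i <= l)%N -> i != j -> f i y = 0) & F y = w j * f j y].
  move=> hm hj sy ny; have [q1 q2] := QN y ny.
  have hc : c m <= `|f j y|.
    apply: le_trans (q1 j hj).
    rewrite (bigD1_seq m) /=; last by rewrite /index_iota iota_uniq.
      rewrite indicE mem_set // mulr1 lerDl big_seq_cond; apply: sumr_ge0 => i /andP[hi _].
      rewrite mulr_ge0 // ?indicE ?ler0n //; apply/ltW/cpos; by move: hi; rewrite mem_index_iota ltnS.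
    by rewrite mem_index_iota ltnS.
  have hz i : (1 <= i <= l)%N -> i != j -> f i y = 0.
    move=> hi ij; have ij' : i <> j by apply/eqP.
    apply/normr0_eq0/eqP; rewrite eq_le normr_ge0 andbT leNgt; apply/negP => hpos.
    have : 0 < Num.min `|f i y| `|f j y| by rewrite lt_min hpos (lt_le_trans (cpos m hm) hc).
    by rewrite (q2 i j hi hj ij') ltxx.
  split => //; rewrite /F (bigD1_seq j) /=; last by rewrite /index_iota iota_uniq.
    rewrite big1_seq ?addr0 // => i /andP[ij hi]; rewrite hz ?mulr0 //.
    by move: hi; rewrite mem_index_iota ltnS.
  by rewrite mem_index_iota ltnS.
pose sig' m j := sigma m j `\` N.
pose A := [set y | t < `|F y|].
have mF : measurable_fun setT F.
  rewrite /F; apply: msum => j hj.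
  apply: (@measurable_funM _ _ _ _ (fun=> _) (f j)); first exact: measurable_cst.
  by apply: (fL j _).1; move: hj; rewrite mem_index_iota ltnS.
have mA : measurable A.
  have := measurableT_comp (@normr_measurable R setT) mF measurableT (measurable_itv `]t, +oo[).
  by rewrite setTI preimage_itvoy.
have msig m j : (1 <= m <= k)%N -> (1 <= j <= l)%N -> measurable (sig' m j).
  by move=> hm hj; apply: measurableD => //; apply: sm.
have inA m j : (1 <= m <= k)%N -> (1 <= j <= l)%N -> j%:R < x m -> sig' m j `<=` A.
  move=> hm hj hjx y [sy ny]; rewrite /A /=; have [hc _ ->] := Fv m j y hm hj sy ny.
  rewrite normrM (ger0_norm (powR_ge0 _ _)).
  apply: lt_le_trans (ler_wpM2l (powR_ge0 _ _) hc).
  have j0 : 0 < (j%:R : R) by rewrite ltr0n; case/andP: hj.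
  apply: (@ltr_powR_inv _ p) => //; [exact: ltW|by rewrite mulr_ge0 ?powR_ge0 // ltW // cpos|].
  rewrite powRM ?powR_ge0 ?(ltW (cpos m hm)) // /w -powRrM mulNr mulVf ?gt_eqF //.
  rewrite powR_inv1 ?ler0n // mulrC ltr_pdivlMr //.
  by move: hjx; rewrite /x ltr_pdivlMr // mulrC.
have dj m j m' j' : (1 <= m <= k)%N -> (1 <= j <= l)%N -> (1 <= m' <= k)%N ->
    (1 <= j' <= l)%N -> (m != m') || (j != j') -> sig' m j `&` sig' m' j' = set0.
  move=> hm hj hm' hj' hne; apply/seteqP; split => // y [[s1 n1] [s2 n2]].
  case: (eqVneq j j') => [ejj|jj'].
    subst j'; move: hne; rewrite eqxx orbF => /eqP mm'.
    have : (sigma m j `&` sigma m' j) y by split.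
    by rewrite (sdisj j m m' hj hm hm' mm').
  have [_ hz _] := Fv m j y hm hj s1 n1.
  have [hc' _ _] := Fv m' j' y hm' hj' s2 n2.
  have := hz j' hj'; rewrite eq_sym => /(_ jj') h0.
  by move: hc'; rewrite h0 normr0 leNgt cpos.
have musig m j : (1 <= m <= k)%N -> (1 <= j <= l)%N -> mu (sig' m j) = mu (sigma m j).
  move=> hm hj; rewrite [RHS](measureDI mu (sm j m hj hm) mN).
  rewrite (@subset_measure0 _ _ _ mu (sigma m j `&` N) N) ?adde0 //.
  exact: measurableI (sm j m hj hm) mN.
have jr m j : (j \in index_iota 1 (n m).+1) -> (1 <= j <= l)%N.
  by rewrite mem_index_iota ltnS => /andP[-> /leq_trans]; apply.
have mr m : (m \in index_iota 1 k.+1) -> (1 <= m <= k)%N.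
  by rewrite mem_index_iota ltnS.
pose Ui m := \big[setU/set0]_(j <- index_iota 1 (n m).+1) sig' m j.
pose U := \big[setU/set0]_(m <- index_iota 1 k.+1) Ui m.
have mUi m : (1 <= m <= k)%N -> measurable (Ui m).
  by move=> hm; rewrite /Ui big_seq; apply: bigsetU_measurable => j hj; apply: msig => //; apply: jr hj.
have mU : measurable U.
  by rewrite /U big_seq; apply: bigsetU_measurable => m hm; apply: mUi; apply: mr.
have inner m : (1 <= m <= k)%N ->
    mu (Ui m) = (\sum_(j <- index_iota 1 (n m).+1) mu (sig' m j))%E.
  move=> hm; apply: mu_bigU; first by rewrite /index_iota iota_uniq.
    by move=> j hj; apply: msig => //; apply: jr hj.
  by move=> j j' hj hj' jj'; apply: dj => //; [apply: jr hj|apply: jr hj'|rewrite jj' orbT].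
have outer : mu U = (\sum_(m <- index_iota 1 k.+1) mu (Ui m))%E.
  apply: mu_bigU; first by rewrite /index_iota iota_uniq.
    by move=> m hm; apply: mUi; apply: mr.
  move=> m m' hm hm' mm'; apply/seteqP; split => // y [].
  rewrite /Ui -!bigcup_seq => -[j /= hj s1] [j' /= hj' s2].
  have := dj m j m' j' (mr _ hm) (jr _ _ hj) (mr _ hm') (jr _ _ hj').
  rewrite mm' => /(_ isT) h.
  have : (sig' m j `&` sig' m' j') y by split.
  by rewrite h.
have UA : U `<=` A.
  move=> y; rewrite /U -bigcup_seq => -[m /= hm]; rewrite /Ui -bigcup_seq => -[j /= hj].
  apply: inA; [exact: mr|exact: (jr _ _ hj)|apply: (nlt m j (mr _ hm))].
  by move: hj; rewrite mem_index_iota ltnS => /andP[].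
have key : (((k%:R * (delta `^ p / (2 * t `^ p))))%:E <= mu A)%E.
  have hUA : (mu U <= mu A)%E by apply: le_measure; rewrite ?inE.
  apply: le_trans hUA.
  rewrite mulr_natl (_ : _ *+ k = \sum_(1 <= i < k.+1) (delta `^ p / (2 * t `^ p))); last first.
    by rewrite sumr_const_nat subSS subn0.
  rewrite outer -sumEFin big_seq [leRHS]big_seq.
  apply: lee_sum => m hm; have hm' := mr _ hm.
  rewrite inner // (eq_big_seq (fun j => mu (sigma m j))); last first.
    by move=> j hj; rewrite musig //; apply: jr hj.
  rewrite big_seq.
  apply: (@le_trans _ _ (\sum_(j <- index_iota 1 (n m).+1 | j \in index_iota 1 (n m).+1) ((delta / c m) `^ p)%:E)%E); last first.
    by apply: lee_sum => j hj; exact: ltW (smu j m (jr _ _ hj) hm').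
  rewrite -big_seq sumEFin sumr_const_nat lee_fin subSS subn0 -[X in _ <= X]mulr_natr.
  apply: le_trans (ler_wpM2l (powR_ge0 _ _) (nge m hm')).
  have cm0 := cpos m hm'.
  have hdc : (delta / c m) `^ p * c m `^ p = delta `^ p.
    by rewrite -powRM ?divfK ?gt_eqF // ?divr_ge0 // ltW.
  have -> : (delta / c m) `^ p * (x m / 2) = delta `^ p / (2 * t `^ p).
    rewrite /x -hdc; field; by rewrite gt_eqF.
  by [].
rewrite /weak_norm.
apply: (@le_trans _ _ (t%:E * poweR (mu A) p^-1)%E); last first.
  by apply: ereal_sup_ubound; exists t.
have mA0 : (0 <= mu A)%E by apply: measure_ge0.
move: key mA0; case: (mu A) => [r| |] key mA0.
- rewrite poweR_EFin -EFinM lee_fin.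
  move: key mA0; rewrite !lee_fin => key r0.
  rewrite -[delta](powRK _ delta p p0 (ltW d0)) -[t](powRK _ t p p0 (ltW t0)).
  rewrite -!powRM ?powR_ge0 ?divr_ge0 ?ler0n //.
  apply: ge0_ler_powR; rewrite ?nnegrE ?invr_ge0 ?mulr_ge0 ?divr_ge0 ?ler0n ?powR_ge0 //; first exact: ltW.
  apply: le_trans (ler_wpM2l (ltW tp0) key).
  have -> : t `^ p * (k%:R * (delta `^ p / (2 * t `^ p))) = k%:R / 2 * delta `^ p.
    by field; rewrite gt_eqF.
  by [].
- by rewrite poweRyr ?invr_eq0 ?gt_eqF // mulry gtr0_sg // mul1e leey.
- by [].
Qed.
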